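(* Let $s(a,b)$ and $s(c,d)$ be proper $n$-sided one-step dice with $s(a,b)>s(c,d)$. Then there are integers $x,y,z$ such that the ordered pair $(s(a,b),s(c,d))$ has one of the following four forms: (1) $s(a,b)=s(x,y)$ and $s(c,d)=s(y,z)$; (2) $s(a,b)=s(x,y)$ and $s(c,d)=s(z,x+2)$; (3) $s(a,b)=s(x+1,y)$ and $s(c,d)=s(x,z)$; (4) $s(a,b)=s(x,y+1)$ and $s(c,d)=s(z,y)$.
   Context: Let $n\ge 3$. An $n$-sided die is a non-decreasing $n$-tuple of integers $(a_1,\dots,a_n)$. The standard die is $P_n=(1,2,\dots,n)$. For integers $a,b$ with $1\le a\le n-1$, $2\le b\le n$ and $b\notin\{a,a+1\}$, let $s(a,b)$ denote the die obtained from $P_n$ by replacing the face with value $a$ by $a+1$ and the face with value $b$ by $b-1$ (faces then arranged in non-decreasing order); these are the proper $n$-sided one-step dice. For two $n$-sided dice $A=(a_1,\dots,a_n)$, $B=(b_1,\dots,b_n)$ we write $A>B$ (''$A$ beats $B$'') if $\#\{(i,j): a_i>b_j\} > \#\{(i,j): b_j>a_i\}$, where $(i,j)$ ranges over $\{1,\dots,n\}^2$; if the two counts are equal, $A$ and $B$ tie. *)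

(* Defs.v *)
(* Dice are sequences of naturals (all faces of one-step
   dice are in 1..n, so natural numbers suffice). *)
From mathcomp Require Import all_boot.
Set Implicit Arguments. Unset Strict Implicit. Unset Printing Implicit Defensive.

Definition std_die (n : nat) : seq nat := iota 1 n.

Definition one_step (n a b : nat) : seq nat :=
  sort leq [seq (if i == a then a.+1 else if i == b then b.-1 else i)
           | i <- std_die n].

Definition proper_step (n a b : nat) : bool :=
  [&& 1 <= a, a <= n.-1, 2 <= b, b <= n, b != a & b != a.+1].

Definition wins (A B : seq nat) : nat :=
  \sum_(x <- A) count (fun y => y < x) B.

Definition beats (A B : seq nat) : bool := wins B A < wins A B.

(* Main.v *)
Require Import Defs.
From mathcomp Require Import all_boot all_algebra zify ring lra.
Import GRing.Theory Num.Theory.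

Definition mm (a b i : nat) : nat := if i == a then a.+1 else if i == b then b.-1 else i.

Lemma one_step_perm n a b : perm_eq (one_step n a b) (map (mm a b) (iota 1 n)).
Proof. by rewrite /one_step perm_sort. Qed.

Lemma count_sum (T : Type) (p : pred T) (s : seq T) :
  count p s = \sum_(x <- s) (p x : nat).
Proof. by elim: s => [|x s IH]; rewrite ?big_nil ?big_cons //= IH. Qed.

Local Open Scope ring_scope.

Lemma L1 (r : seq nat) a (c : int) : uniq r -> a \in r ->
  \sum_(i <- r) (if i == a then c else 0) = c.
Proof.
move=> ur ar; rewrite (bigD1_seq a) //= eqxx big1 ?addr0 // => i /negbTE -> //.
Qed.

Lemma Lstep (F : nat -> int) n a b : (1 <= a <= n)%N -> (1 <= b <= n)%N -> a != b ->
  \sum_(i <- iota 1 n) F (mm a b i) =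
  \sum_(i <- iota 1 n) F i + (F a.+1 - F a) + (F b.-1 - F b).
Proof.
move=> ha hb ab.
have ur : uniq (iota 1 n) by apply: iota_uniq.
have ain : a \in iota 1 n by rewrite mem_iota; lia.
have bin : b \in iota 1 n by rewrite mem_iota; lia.
rewrite (eq_bigr (fun i => F i + (if i == a then F a.+1 - F a else 0) + (if i == b then F b.-1 - F b else 0))).
  by rewrite !big_split /= !L1.
move=> i _; rewrite /mm; case: eqP => [->|ia]; first by rewrite (negbTE ab); ring.
case: eqP => [->|ib]; ring.
Qed.

Definition sg (x y : nat) : int := (y < x)%N%:R - (x < y)%N%:R.

Lemma antisym r : \sum_(i <- r) \sum_(j <- r) sg i j = 0.
Proof.
set S := (X in X = _).
have : S = - S.
  rewrite {1}/S exchange_big -sumrN; apply: eq_bigr => i _.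
  rewrite -sumrN; apply: eq_bigr => j _; rewrite /sg; ring.
lia.
Qed.

Lemma Esum n p : (1 <= p)%N -> (p < n)%N ->
  \sum_(j <- iota 1 n) sg p.+1 j - \sum_(j <- iota 1 n) sg p j = 2.
Proof.
move=> h1 h2.
have ur : uniq (iota 1 n) by apply: iota_uniq.
have ain : p \in iota 1 n by rewrite mem_iota; lia.
have bin : p.+1 \in iota 1 n by rewrite mem_iota; lia.
rewrite -sumrB (eq_bigr (fun j => (if j == p then 1 else 0) + (if j == p.+1 then 1 else 0))).
  by rewrite big_split /= !L1.
move=> j _; rewrite /sg; case: (j =P p) => [->|jp]; first by rewrite (_ : (p == p.+1) = false); lia.
case: (j =P p.+1) => [->|jq]; lia.
Qed.

Lemma wins_perm {A A' B B'} : perm_eq A A' -> perm_eq B B' -> wins A B = wins A' B'.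
Proof.
move=> pA pB; rewrite /wins (perm_big _ pA); apply: eq_bigr => x _.
by move/permP: pB.
Qed.

Lemma wins_map n a b c d :
  wins (map (mm a b) (iota 1 n)) (map (mm c d) (iota 1 n)) =
  (\sum_(i <- iota 1 n) \sum_(j <- iota 1 n) (mm c d j < mm a b i) : nat)%N.
Proof.
rewrite /wins big_map; apply: eq_bigr => i _; by rewrite count_sum big_map.
Qed.

Definition Kp (c d x : nat) : int := (sg x c.+1 - sg x c) + (sg x d.-1 - sg x d).

Lemma Dform n a b c d :
  (1 <= a)%N -> (a < n)%N -> (2 <= b <= n)%N -> a != b ->
  (1 <= c)%N -> (c < n)%N -> (2 <= d <= n)%N -> c != d ->
  \sum_(i <- iota 1 n) \sum_(j <- iota 1 n) sg (mm a b i) (mm c d j) =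
  (Kp c d a.+1 - Kp c d a) + (Kp c d b.-1 - Kp c d b).
Proof.
move=> a1 a2 b1 ab c1 c2 d1 cd.
have ur : uniq (iota 1 n) by apply: iota_uniq.
rewrite (eq_bigr (fun i => \sum_(j <- iota 1 n) sg (mm a b i) j + Kp c d (mm a b i))); last first.
  move=> i _; rewrite Lstep; first by rewrite /Kp !addrA.
  - by apply/andP; split; lia.
  - by apply/andP; split; lia.
  - exact: cd.
rewrite big_split /=.
rewrite (Lstep (fun x => \sum_(j <- iota 1 n) sg x j)) //; try lia.
rewrite (Lstep (Kp c d)) //; try lia.
rewrite antisym Esum //.
have Eb : \sum_(j <- iota 1 n) sg b j - \sum_(j <- iota 1 n) sg b.-1 j = 2.
  have hb : b = (b.-1).+1 by lia.
  rewrite [in sg b]hb Esum //; lia.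
have -> : \sum_(i <- iota 1 n) Kp c d i = 0.
  have cin : c \in iota 1 n by rewrite mem_iota; lia.
  have c1in : c.+1 \in iota 1 n by rewrite mem_iota; lia.
  have din : d \in iota 1 n by rewrite mem_iota; lia.
  have d1in : d.-1 \in iota 1 n by rewrite mem_iota; lia.
  rewrite (eq_bigr (fun i => ((if i == d.-1 then 1 else 0) + (if i == d then 1 else 0)) -
                              ((if i == c then 1 else 0) + (if i == c.+1 then 1 else 0)))).
    by rewrite sumrB !big_split /= !L1 // subrr.
  move=> i _; rewrite /Kp /sg.
  repeat (case: eqP => ?); lia.
lra.
Qed.

Lemma beq (x y z w : nat) : (x = y <-> z = w) -> (x == y) = (z == w).
Proof. move=> [h1 h2]; apply/idP/idP => /eqP H; apply/eqP; auto. Qed.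
Definition T (a b y : nat) : int := (a.+1 == y)%:R - (a == y)%:R + (b.-1 == y)%:R - (b == y)%:R.
Lemma TdE a b d : (0 < d)%N -> (0 < b)%N -> T a b d.-1 + T a b d =
  (d == (a+2)%N)%:R - (d == a)%:R + (b == d.+1)%:R - (d == b.+1)%:R.
Proof. move=> ? ?; rewrite /T.
rewrite (@beq a.+1 d.-1 d (a+2)); last lia.
rewrite (@beq a d.-1 a.+1 d); last lia.
rewrite (@beq b.-1 d.-1 b d); last lia.
rewrite (@beq b.-1 d b d.+1); last lia.
rewrite (@beq b d.-1 d b.+1); last lia.
rewrite (@beq a d d a); last lia.
ring.
Qed.
Lemma TcE a b c : (0 < b)%N -> T a b c + T a b c.+1 =
  (c == a.+1)%:R - (a == c.+1)%:R + (b == (c+2)%N)%:R - (b == c)%:R.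
Proof. move=> ?; rewrite /T.
rewrite (@beq a.+1 c c a.+1); last lia.
rewrite (@beq a.+1 c.+1 a c); last lia.
rewrite (@beq b.-1 c b c.+1); last lia.
rewrite (@beq b.-1 c.+1 b (c+2)); last lia.
ring.
Qed.
Lemma KpE c d x : (0 < d)%N -> Kp c d x =
  ((x == d.-1)%:R + (x == d)%:R) - ((x == c)%:R + (x == c.+1)%:R).
Proof. move=> d0; rewrite /Kp /sg; lia. Qed.
Lemma totE a b c d : (0 < d)%N -> (Kp c d a.+1 - Kp c d a) + (Kp c d b.-1 - Kp c d b) =
  (T a b d.-1 + T a b d) - (T a b c + T a b c.+1).
Proof. move=> ?; rewrite !KpE // /T; ring. Qed.
Lemma final a b c d : (0 < a)%N -> (1 < b)%N -> (0<c)%N -> (1 < d)%N ->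
 c <> b -> d <> (a+2)%N -> a <> (c+1)%N -> b <> (d+1)%N ->
 (0 < (Kp c d a.+1 - Kp c d a) + (Kp c d b.-1 - Kp c d b)) -> False.
Proof.
move=> ? ? ? ? h1 h2 h3 h4; rewrite totE ?TdE ?TcE; try lia.
Qed.

Local Close Scope ring_scope.

Theorem mainTheorem2 (n a b c d : nat) :
  3 <= n ->
  proper_step n a b -> proper_step n c d ->
  beats (one_step n a b) (one_step n c d) ->
  exists x y z : nat,
    [\/ [/\ proper_step n x y, proper_step n y z,
            one_step n a b = one_step n x y & one_step n c d = one_step n y z],
        [/\ proper_step n x y, proper_step n z (x + 2),
            one_step n a b = one_step n x y & one_step n c d = one_step n z (x + 2)],
        [/\ proper_step n (x + 1) y, proper_step n x z,
            one_step n a b = one_step n (x + 1) y & one_step n c d = one_step n x z]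
      | [/\ proper_step n x (y + 1), proper_step n z y,
            one_step n a b = one_step n x (y + 1) & one_step n c d = one_step n z y]].
Proof.
move=> n3 pab pcd.
rewrite /beats (wins_perm (one_step_perm n c d) (one_step_perm n a b))
  (wins_perm (one_step_perm n a b) (one_step_perm n c d)) !wins_map => hb.
have hab := pab; have hcd := pcd.
move: hab hcd => /andP[a1 /andP[a2 /andP[b1 /andP[b2 /andP[ba ba1]]]]] /andP[c1 /andP[c2 /andP[d1 /andP[d2 /andP[dc dc1]]]]].
have HD : (0 < (Kp c d a.+1 - Kp c d a) + (Kp c d b.-1 - Kp c d b))%R.
  rewrite -(Dform n); [ | lia | lia | lia | by rewrite eq_sym | lia | lia | lia | by rewrite eq_sym].
    rewrite (eq_bigr (fun i => (\sum_(j <- iota 1 n) ((mm c d j < mm a b i)%:R - (mm a b i < mm c d j)%:R : int))%R)); last by [].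
    rewrite (eq_bigr (fun i => (\sum_(j <- iota 1 n) ((mm c d j < mm a b i)%:R : int) - \sum_(j <- iota 1 n) ((mm a b i < mm c d j)%:R : int))%R)); last by move=> i _; rewrite sumrB.
    rewrite sumrB.
    under eq_bigr => i _ do rewrite -natr_sum.
    under [X in (_ - X)%R]eq_bigr => i _ do rewrite -natr_sum.
    rewrite -!natr_sum.
    move: hb; rewrite [X in (X < _)%N]exchange_big => hb.
    rewrite subr_gt0 ltr_nat; exact: hb.
case: (c =P b) => [hcb|ncb].
  by exists a, b, d; apply: Or41; split => //; rewrite -hcb.
case: (d =P a + 2) => [hd|nd].
  by exists a, b, c; apply: Or42; split => //; rewrite -hd.
case: (a =P c + 1) => [ha|na].
  by exists c, b, d; apply: Or43; split => //; rewrite -ha.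
case: (b =P d + 1) => [hb'|nb].
  by exists a, d, c; apply: Or44; split => //; rewrite -hb'.
exfalso; apply: (final _ _ _ _ _ _ _ _ ncb nd na nb HD); lia.
Qed.
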